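(* Let $G$ be a graph on $n$ vertices such that $G\neq K_n$ and $G\ne \overline{K_n}$ (i.e. $G$ is neither complete nor edgeless). Then \[ \operatorname{rank}(A_G+I)\cdot\operatorname{rank}(A_{\overline G}+I)\ \ge\ 2n. \] Moreover, equality holds if and only if $G$ or $\overline{G}$ is (isomorphic to) $K_{a,n-a}$ for some integer $a$ with $1\le a\le\lfloor n/2\rfloor$.
   Context: All graphs are simple (undirected, no loops or multiple edges). $A_G$ denotes the $n\times n$ adjacency matrix of $G$, $\overline{G}$ the complement of $G$, $I=I_n$ the $n\times n$ identity matrix, and $\operatorname{rank}$ is the rank over $\mathbb{R}$. $K_n$ is the complete graph on $n$ vertices, $\overline{K_n}$ the edgeless graph on $n$ vertices, and $K_{a,b}$ the complete bipartite graph with part sizes $a$ and $b$. *)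

(* Defs.v *)
From HB Require Import structures.
From mathcomp Require Import all_boot all_order all_algebra.
Set Implicit Arguments. Unset Strict Implicit. Unset Printing Implicit Defensive.
Import Order.TTheory GRing.Theory Num.Theory.

Definition simple_graph (T : finType) (e : rel T) : Prop :=
  (forall x y, e x y = e y x) /\ (forall x, ~~ e x x).

Definition compl_graph (T : finType) (e : rel T) : rel T :=
  fun x y => (x != y) && ~~ e x y.

Definition adjmx (R : nzRingType) (n : nat) (e : rel 'I_n) : 'M[R]_n :=
  \matrix_(i, j) ((e i j)%:R)%R.

Definition is_complete (T : finType) (e : rel T) : Prop :=
  forall x y, x != y -> e x y.

Definition is_edgeless (T : finType) (e : rel T) : Prop :=
  forall x y, ~~ e x y.

Definition complete_bipartite (a b : nat) : rel 'I_(a + b) :=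
  fun i j => (i < a)%N != (j < a)%N.

Definition graph_iso (T1 T2 : finType) (e1 : rel T1) (e2 : rel T2) : Prop :=
  exists f : T1 -> T2, bijective f /\ forall x y, e1 x y = e2 (f x) (f y).
Arguments complete_bipartite : clear implicits.

(* Main.v *)
Require Import Defs.
From mathcomp Require Import all_boot all_order all_algebra.
From mathcomp Require Import ring lra zify.
Import Order.TTheory GRing.Theory Num.Theory.
Set Implicit Arguments. Unset Strict Implicit. Unset Printing Implicit Defensive.

Section Mat.
Variables (R : realFieldType) (n : nat).
Local Open Scope ring_scope.

Definition Jm : 'M[R]_n := const_mx 1.
Definition Cm : 'M[R]_n := 1%:M + Jm.
Definition Ci : 'M[R]_n := 1%:M - (n.+1%:R)^-1 *: Jm.
Definition bf (X : 'M[R]_n) (u v : 'rV[R]_n) : R := (u *m X *m v^T) 0 0.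

Lemma JJ : Jm *m Jm = n%:R *: Jm.
Proof.
apply/matrixP=> i j; rewrite !mxE.
under eq_bigr do rewrite !mxE mulr1.
by rewrite sumr_const card_ord mulr1.
Qed.

Lemma N0 : (n.+1%:R : R) != 0.
Proof. by rewrite pnatr_eq0. Qed.

Lemma CCi : Cm *m Ci = 1%:M.
Proof.
rewrite /Cm /Ci mulmxDl mulmxBr mulmxBr mul1mx mulmx1 mul1mx.
rewrite -!scalemxAr JJ scalerA.
have -> : (1%:M - (n.+1%:R)^-1 *: Jm + (Jm - ((n.+1%:R)^-1 * n%:R) *: Jm) : 'M[R]_n)
   = 1%:M + (1 - (n.+1%:R)^-1 - (n.+1%:R)^-1 * n%:R) *: Jm.
  by apply/matrixP=> i j; rewrite !mxE; ring.
suff -> : (1 - (n.+1%:R)^-1 - (n.+1%:R)^-1 * n%:R : R) = 0 by rewrite scale0r addr0.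
have h := N0; rewrite -[n.+1]addn1 natrD in h *.
by field.
Qed.

Lemma trJ : Jm^T = Jm.
Proof. by apply/matrixP=> i j; rewrite !mxE. Qed.
Lemma trC : Cm^T = Cm.
Proof. by rewrite /Cm linearD /= trmx1 trJ. Qed.
Lemma trCi : Ci^T = Ci.
Proof. by rewrite /Ci linearB /= trmx1 linearZ /= trJ. Qed.

Lemma CiC : Ci *m Cm = 1%:M.
Proof. by apply: trmx_inj; rewrite trmx_mul trC trCi CCi trmx1. Qed.

Lemma bfDl X u1 u2 v : bf X (u1 + u2) v = bf X u1 v + bf X u2 v.
Proof. by rewrite /bf !mulmxDl mxE. Qed.
Lemma bfDr X u v1 v2 : bf X u (v1 + v2) = bf X u v1 + bf X u v2.
Proof. by rewrite /bf linearD mulmxDr mxE. Qed.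
Lemma bfNl X u v : bf X (- u) v = - bf X u v.
Proof. by rewrite /bf !mulNmx mxE. Qed.
Lemma bfNr X u v : bf X u (- v) = - bf X u v.
Proof. by rewrite /bf linearN mulmxN mxE. Qed.
Lemma bfZl X a u v : bf X (a *: u) v = a * bf X u v.
Proof. by rewrite /bf -!scalemxAl mxE. Qed.
Lemma bfZr X a u v : bf X u (a *: v) = a * bf X u v.
Proof. by rewrite /bf linearZ /= -scalemxAr mxE. Qed.
Lemma bfBl X u1 u2 v : bf X (u1 - u2) v = bf X u1 v - bf X u2 v.
Proof. by rewrite bfDl bfNl. Qed.
Lemma bfBr X u v1 v2 : bf X u (v1 - v2) = bf X u v1 - bf X u v2.
Proof. by rewrite bfDr bfNr. Qed.
Lemma bfDm X Y u v : bf (X + Y) u v = bf X u v + bf Y u v.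
Proof. by rewrite /bf mulmxDr mulmxDl mxE. Qed.
Lemma bfBm X Y u v : bf (X - Y) u v = bf X u v - bf Y u v.
Proof. rewrite bfDm; congr (_ + _); by rewrite /bf mulmxN mulNmx mxE. Qed.
Lemma bf_mul X P Q u v : bf X (u *m P) (v *m Q) = bf (P *m X *m Q^T) u v.
Proof. by rewrite /bf trmx_mul !mulmxA. Qed.
Lemma bf_sym X u v : X^T = X -> bf X u v = bf X v u.
Proof.
move=> hX; rewrite /bf.
have <- : ((u *m X *m v^T)^T) 0 0 = (u *m X *m v^T) 0 0 by rewrite mxE.
by rewrite !trmx_mul trmxK hX mulmxA.
Qed.
Lemma bf_delta X i j : bf X (delta_mx 0 i) (delta_mx 0 j) = X i j.
Proof.
by rewrite /bf -rowE trmx_delta -colE !mxE.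
Qed.
Lemma bf1 u v : bf 1%:M u v = \sum_(k < n) u 0 k * v 0 k.
Proof. rewrite /bf mulmx1 mxE; apply: eq_bigr => k _; by rewrite mxE. Qed.
Lemma bfJ u v : bf Jm u v = (\sum_k u 0 k) * (\sum_k v 0 k).
Proof.
rewrite /bf mxE big_distrr /=; apply: eq_bigr => j _.
rewrite /Jm !mxE; congr (_ * _); apply: eq_bigr => k _; by rewrite !mxE mulr1.
Qed.
Lemma bfC_ge0 u : 0 <= bf Cm u u.
Proof.
rewrite /Cm bfDm bf1 bfJ; apply: addr_ge0; last exact: sqr_ge0.
by apply: sumr_ge0 => k _; exact: sqr_ge0.
Qed.

Lemma bfCi_ge0 w : 0 <= bf Ci w w.
Proof.
have -> : bf Ci w w = bf Cm (w *m Ci) (w *m Ci).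
  by rewrite bf_mul trCi -mulmxA CCi mulmx1.
exact: bfC_ge0.
Qed.

Lemma bfM_gen (A B : 'M[R]_n) z y : A^T = A -> B = Cm - A ->
  bf (A - A *m Ci *m A) z z <= bf A (z - y) (z - y) + bf B y y.
Proof.
move=> hA hB.
have key : bf A (z - y) (z - y) + bf B y y - bf (A - A *m Ci *m A) z z
   = bf Ci (y *m Cm - z *m A) (y *m Cm - z *m A).
  rewrite !bfBl !bfBr !bf_mul trC hA.
  have e1 : Cm *m Ci *m Cm = Cm by rewrite CCi mul1mx.
  have e2 : Cm *m Ci *m A = A by rewrite CCi mul1mx.
  have e3 : A *m Ci *m Cm = A by rewrite -(mulmxA A Ci Cm) CiC mulmx1.
  rewrite e1 e2 e3 hB !bfBm (bf_sym _ _ hA).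
  ring.
rewrite -subr_ge0 key; exact: bfCi_ge0.
Qed.


Lemma rank_gen (A B : 'M[R]_n) : A^T = A -> B = Cm - A ->
  (\rank (A - A *m Ci *m A)%R + n <= \rank A + \rank B)%N.
Proof.
move=> hA hB.
have MB : A - A *m Ci *m A = A *m Ci *m B.
  by rewrite hB (mulmxBr (A *m Ci)) -(mulmxA A Ci Cm) CiC mulmx1.
have MA : A - A *m Ci *m A = B *m Ci *m A.
  by rewrite hB (mulmxBl Cm A Ci) (mulmxBl (Cm *m Ci)) CCi mul1mx.
have sub1 : (A - A *m Ci *m A <= A :&: B)%MS.
  rewrite sub_capmx; apply/andP; split.
    by rewrite MA submxMl.
  by rewrite MB submxMl.
have r1 := mxrankS sub1.
have uC : Cm \in unitmx by case: (mulmx1_unit CCi).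
have sub2 : (Cm <= A + B)%MS.
  have -> : Cm = A + B by rewrite hB addrC subrK.
  by apply: addmx_sub_adds; apply: submx_refl.
have r2 := mxrankS sub2; rewrite mxrank_unit // in r2.
have := mxrank_sum_cap A B; lia.
Qed.

Definition Zm (z1 z2 : 'rV[R]_n) : 'M[R]_(2, n) :=
  \matrix_(i < 2, j < n) (if i == 0 then z1 0 j else z2 0 j).

Lemma tZ (z1 z2 : 'rV[R]_n) (t : 'rV[R]_2) : t *m Zm z1 z2 = t 0 0 *: z1 + t 0 1 *: z2.
Proof.
apply/matrixP=> i j; rewrite !mxE big_ord_recl big_ord1 !mxE /=.
have e1 : lift ord0 (ord0 : 'I_1) = 1 :> 'I_2 by apply: val_inj.
by rewrite e1 (ord1 i).
Qed.

Lemma rank2_det (M : 'M[R]_n) z1 z2 :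
  bf M z1 z1 * bf M z2 z2 - bf M z1 z2 * bf M z2 z1 != 0 ->
  (2 <= \rank M)%N.
Proof.
move=> hdet.
have rf : row_free (Zm z1 z2 *m M).
  apply: inj_row_free => t; rewrite mulmxA tZ => h0.
  have p1 : bf M (t 0 0 *: z1 + t 0 1 *: z2) z1 = 0.
    by rewrite /bf h0 mul0mx mxE.
  have p2 : bf M (t 0 0 *: z1 + t 0 1 *: z2) z2 = 0.
    by rewrite /bf h0 mul0mx mxE.
  rewrite !bfDl !bfZl in p1 p2.
  set a := bf M z1 z1 in hdet p1 p2; set b := bf M z1 z2 in hdet p1 p2.
  set c := bf M z2 z1 in hdet p1 p2; set d := bf M z2 z2 in hdet p1 p2.
  have h1 : (a * d - b * c) * t 0 0 = 0.
    have -> : (a * d - b * c) * t 0 0 = d * (t 0 0 * a + t 0 1 * c) - c * (t 0 0 * b + t 0 1 * d) by ring.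
    by rewrite p1 p2; ring.
  have h2 : (a * d - b * c) * t 0 1 = 0.
    have -> : (a * d - b * c) * t 0 1 = a * (t 0 0 * b + t 0 1 * d) - b * (t 0 0 * a + t 0 1 * c) by ring.
    by rewrite p1 p2; ring.
  move/eqP: h1; rewrite mulf_eq0 (negbTE hdet) /= => /eqP h1.
  move/eqP: h2; rewrite mulf_eq0 (negbTE hdet) /= => /eqP h2.
  apply/matrixP=> i j; rewrite (ord1 i) !mxE.
  case: j => [[|[|k]] hk] //.
  - by rewrite -h1; congr (t _ _); apply: val_inj.
  - by rewrite -h2; congr (t _ _); apply: val_inj.
have := mxrankM_maxr (Zm z1 z2) M.
by move: rf; rewrite /row_free => /eqP ->.
Qed.

End Mat.

Section Graph.
Variables (R : realFieldType) (n : nat) (e : rel 'I_n).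
Hypothesis He : simple_graph e.
Local Open Scope ring_scope.

Definition Am : 'M[R]_n := adjmx R e + 1%:M.
Definition Bm : 'M[R]_n := adjmx R (compl_graph e) + 1%:M.
Definition Mm : 'M[R]_n := Am - Am *m Ci R n *m Am.

Lemma esym x y : e x y = e y x. Proof. by case: He. Qed.
Lemma eirr x : e x x = false. Proof. by case: He => _ h; apply/negbTE. Qed.

Lemma Am_E i j : Am i j = ((i == j) || e i j)%:R.
Proof.
rewrite /Am /adjmx !mxE; case: eqVneq => [->|hij]; first by rewrite eirr add0r.
by rewrite addr0 /=.
Qed.

Lemma Bm_E i j : Bm i j = ((i == j) || ~~ e i j)%:R.
Proof.
rewrite /Bm /adjmx /compl_graph !mxE; case: eqVneq => [->|hij] /=; first by rewrite add0r.
by rewrite addr0.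
Qed.

Lemma trAm : Am^T = Am.
Proof. by apply/matrixP=> i j; rewrite mxE !Am_E eq_sym esym. Qed.

Lemma BCA : Bm = Cm R n - Am.
Proof.
apply/matrixP=> i j; rewrite Bm_E; move: (Am_E i j); move: (Am) => A hA; rewrite /Cm /Jm !mxE hA.
case: eqVneq => [->|hij] /=; first by rewrite ?eirr ?eqxx /=; ring.
by case: (e i j) => /=; ring.
Qed.

Lemma rank_AB : (\rank Mm + n <= \rank Am + \rank Bm)%N.
Proof. exact: (rank_gen trAm BCA). Qed.

Lemma Mle z y : bf Mm z z <= bf Am (z - y) (z - y) + bf Bm y y.
Proof. exact: (bfM_gen _ _ trAm BCA). Qed.

Lemma trMm : Mm^T = Mm.
Proof.
by rewrite /Mm linearB /= !trmx_mul trAm (trCi R n) mulmxA.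
Qed.

Definition dv (i : 'I_n) : 'rV[R]_n := delta_mx 0 i.

Lemma bf3 (X : 'M[R]_n) x y w :
  bf X (dv x + dv y - dv w) (dv x + dv y - dv w) =
  X x x + X y y + X w w + X x y + X y x - X x w - X w x - X y w - X w y.
Proof. rewrite !(bfDl, bfNl, bfDr, bfNr) !bf_delta; ring. Qed.

Lemma P3_neg x w y : e x w -> e w y -> x != y -> ~~ e x y ->
  bf Am (dv x + dv y - dv w) (dv x + dv y - dv w) = -1.
Proof.
move=> hxw hwy hxy nxy.
have nxw : x != w by apply: contraTneq hxw => ->; rewrite eirr.
have nwy : w != y by apply: contraTneq hwy => ->; rewrite eirr.
rewrite bf3 !Am_E !eqxx /= (negbTE hxy) (negbTE nxw) (negbTE nwy) eq_sym (negbTE hxy).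
rewrite eq_sym (negbTE nxw) eq_sym (negbTE nwy) (negbTE nxy) esym (negbTE nxy).
rewrite hxw hwy esym hxw esym hwy /=; ring.
Qed.

Lemma K2K1_neg x y w : e x y -> ~~ e x w -> ~~ e y w -> x != w -> y != w ->
  bf Bm (dv x + dv y - dv w) (dv x + dv y - dv w) = -1.
Proof.
move=> hxy nxw nyw dxw dyw.
have dxy : x != y by apply: contraTneq hxy => ->; rewrite eirr.
rewrite bf3 !Bm_E !eqxx /= (negbTE dxy) (negbTE dxw) (negbTE dyw) eq_sym (negbTE dxy).
rewrite eq_sym (negbTE dxw) eq_sym (negbTE dyw) hxy esym hxy /= nxw nyw esym nxw esym nyw /=; ring.
Qed.


Lemma bf0l (X : 'M[R]_n) v : bf X 0 v = 0.
Proof. by rewrite /bf !mul0mx mxE. Qed.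

Lemma Mle1 z : bf Mm z z <= bf Am z z.
Proof. have := Mle z 0; by rewrite subr0 bf0l addr0. Qed.
Lemma Mle2 z : bf Mm z z <= bf Bm z z.
Proof. have := Mle z z; by rewrite subrr bf0l add0r. Qed.

Lemma Msym u v : bf Mm u v = bf Mm v u.
Proof. exact: bf_sym trMm. Qed.

Lemma case_plane x w y x' y' w' :
  e x w -> e w y -> x != y -> ~~ e x y ->
  e x' y' -> ~~ e x' w' -> ~~ e y' w' -> x' != w' -> y' != w' ->
  (2 <= \rank Mm)%N.
Proof.
move=> h1 h2 h3 h4 k1 k2 k3 k4 k5.
set z1 := dv x + dv y - dv w; set z2 := dv x' + dv y' - dv w'.
have a1 : bf Am z1 z1 = -1 by exact: P3_neg.
have b2 : bf Bm z2 z2 = -1 by exact: K2K1_neg.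
have hq t0 t1 : bf Mm (t0 *: z1 + t1 *: z2) (t0 *: z1 + t1 *: z2) <= - (t0 ^+ 2 + t1 ^+ 2).
  apply: le_trans (Mle _ (t1 *: z2)) _; rewrite addrK !bfZl !bfZr a1 b2.
  by rewrite le_eqVlt; apply/orP; left; apply/eqP; ring.
clearbody z1 z2.
apply: (@rank2_det R n Mm z1 z2).
have q11 : bf Mm z1 z1 <= -1.
  by have := hq 1 0; rewrite scale1r scale0r addr0; lra.
have := hq (bf Mm z1 z2) (- bf Mm z1 z1).
rewrite !(bfDl, bfDr, bfZl, bfZr) => hh.
have s21 := Msym z2 z1.
move: hh s21 q11; set a := bf Mm z1 z1; set b := bf Mm z1 z2; set c := bf Mm z2 z1; set d := bf Mm z2 z2 => hh s21 q11.
rewrite ?s21 in hh; rewrite ?s21.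
apply/eqP => hd.
have E : b * (b * a + - a * b) + - a * (b * b + - a * d) = a * (a * d - b * b) by ring.
rewrite E sqrrN hd mulr0 in hh.
have : 1 <= a ^+ 2 by rewrite expr2; nra.
have := sqr_ge0 b; lra.
Qed.


Definition P3free := forall x w y, e x w -> e w y -> x != y -> e x y.

Lemma exists_nonedge : ~ is_complete e -> exists u v, u != v /\ ~~ e u v.
Proof.
move=> hnc.
case: (pickP (fun p : 'I_n * 'I_n => (p.1 != p.2) && ~~ e p.1 p.2)) => [[u v] /andP[h1 h2]|H].
  by exists u, v.
exfalso; apply: hnc => x y hxy; move: (H (x, y)) => /=; rewrite hxy /=.
by move/negbFE.
Qed.

Lemma exists_edge : ~ is_edgeless e -> exists x y, e x y.
Proof.
move=> hne.
case: (pickP (fun p : 'I_n * 'I_n => e p.1 p.2)) => [[u v] h|H]; first by exists u, v.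
by exfalso; apply: hne => x y; rewrite (H (x, y)).
Qed.

Lemma free_K2K1 : P3free -> ~ is_complete e -> ~ is_edgeless e ->
  exists x y w, [/\ e x y, ~~ e x w, ~~ e y w, x != w & y != w].
Proof.
move=> hf hnc hne.
have [x [y hxy]] := exists_edge hne.
have [w /andP[hw1 hw2]] : exists w, (x != w) && ~~ e x w.
  case: (pickP (fun w => (x != w) && ~~ e x w)) => [w h|H]; first by exists w.
  exfalso; apply: hnc => u v huv.
  have hx z : z != x -> e x z.
    by move=> hz; move: (H z); rewrite eq_sym hz /= => /negbFE.
  move: huv; case: (eqVneq u x) => [->|hu] huv; first by apply: hx; rewrite eq_sym.
  move: huv; case: (eqVneq v x) => [->|hv] huv; first by rewrite esym; apply: hx.
  by apply: (hf u x v) => //; [rewrite esym; apply: hx | apply: hx].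
exists x, y, w; split => //.
- apply/negP => hyw; move/negP: hw2; apply.
  exact: (hf x y w).
- by apply: contraNneq hw2 => <-.
Qed.

Definition hv (v : 'I_n) : R := \sum_j Am v j.

Lemma Am_ge0 i j : 0 <= Am i j.
Proof. by rewrite Am_E ler0n. Qed.
Lemma Am_le1 i j : Am i j <= 1.
Proof. by rewrite Am_E; case: (_ || _). Qed.

Lemma hv_ge1 v : 1 <= hv v.
Proof.
rewrite /hv (bigD1 v) //= Am_E eqxx /= lerDl.
by apply: sumr_ge0 => j _; exact: Am_ge0.
Qed.

Lemma hv_le v : hv v <= n%:R.
Proof.
rewrite /hv; apply: (@le_trans _ _ (\sum_(j < n) (1:R))).
  by apply: ler_sum => j _; exact: Am_le1.
by rewrite sumr_const card_ord.
Qed.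

Lemma free_rows : P3free -> forall v j, e v j -> forall k, Am v k = Am j k.
Proof.
move=> hf v j hvj k; rewrite !Am_E.
have nvj : v != j by apply: contraTneq hvj => ->; rewrite eirr.
case: (eqVneq v k) => [<-|hvk] /=; first by rewrite esym hvj orbT.
case: (eqVneq j k) => [<-|hjk] /=; first by rewrite hvj.
case hvk' : (e v k); case hjk' : (e j k) => //.
- by move: hjk'; rewrite (hf j v k) // esym.
- by move: hvk'; rewrite (hf v j k).
Qed.

Definition zp : 'rV[R]_n := \row_v (hv v)^-1.

Lemma hv_sym j : \sum_v Am v j = hv j.
Proof. by rewrite /hv; apply: eq_bigr => v _; rewrite !Am_E eq_sym esym. Qed.

Lemma zpA : P3free -> zp *m Am = const_mx 1.
Proof.
move=> hf; apply/matrixP=> i j; rewrite (ord1 i) [RHS]mxE [LHS]mxE.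
have -> : \sum_v zp 0 v * Am v j = \sum_v (hv j)^-1 * Am v j.
  apply: eq_bigr => v _; rewrite mxE.
  case: (eqVneq v j) => [->|hvj] //.
  case hev : (e v j).
    by congr (_^-1 * _); rewrite /hv; apply: eq_bigr => k _; apply: free_rows.
  by rewrite Am_E (negbTE hvj) hev !mulr0.
rewrite -big_distrr /= hv_sym mulVf //.
by have := hv_ge1 j; apply: contraTneq => ->; rewrite ler10.
Qed.


Lemma bfZm a (X : 'M[R]_n) u v : bf (a *: X) u v = a * bf X u v.
Proof. by rewrite /bf -scalemxAr -scalemxAl mxE. Qed.

Lemma sum_hvV : (0 < n)%N -> 1 <= \sum_k (hv k)^-1.
Proof.
move=> n0.
apply: (@le_trans _ _ (\sum_(k < n) (n%:R : R)^-1)).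
  rewrite sumr_const card_ord -[_ *+ n]mulr_natr mulVf //.
  by rewrite pnatr_eq0 -lt0n.
apply: ler_sum => k _.
have h1 := hv_ge1 k; have h2 := hv_le k.
rewrite lef_pV2 // posrE; lra.
Qed.

Lemma case_free : P3free -> ~ is_complete e -> ~ is_edgeless e ->
  (2 <= \rank Mm)%N.
Proof.
move=> hf hnc hne.
have [x [y [w [k1 k2 k3 k4 k5]]]] := free_K2K1 hf hnc hne.
have n0 : (0 < n)%N by case: n x {k1 k2 k3 k4 k5 y w} => [[]|].
set z2 := dv x + dv y - dv w.
have b2 : bf Bm z2 z2 = -1 by exact: K2K1_neg.
have q22 : bf Mm z2 z2 <= -1 by rewrite -b2; exact: Mle2.
clearbody z2.
have q11 : 0 < bf Mm zp zp.
  have E : bf (Am *m Ci R n *m Am) zp zp = bf (Ci R n) (zp *m Am) (zp *m Am).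
    by rewrite bf_mul trAm.
  rewrite /Mm bfBm E.
  rewrite zpA // {1}/bf zpA //.
  have -> : ((const_mx 1 : 'rV[R]_n) *m zp^T) 0 0 = \sum_k (hv k)^-1.
    by rewrite mxE; apply: eq_bigr => k _; rewrite !mxE mul1r.
  rewrite /Ci bfBm bfZm bf1 bfJ.
  have -> : \sum_(k < n) (const_mx 1 : 'rV[R]_n) 0 k * (const_mx 1 : 'rV[R]_n) 0 k = n%:R.
    by rewrite -[in RHS](card_ord n) -sumr_const; apply: eq_bigr => k _; rewrite !mxE mulr1.
  have -> : \sum_(k < n) (const_mx 1 : 'rV[R]_n) 0 k = n%:R.
    by rewrite -[in RHS](card_ord n) -sumr_const; apply: eq_bigr => k _; rewrite !mxE.
  have hs := sum_hvV n0.
  have hN : (0 : R) < n.+1%:R by rewrite ltr0n.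
  have -> : (n%:R - n.+1%:R^-1 * (n%:R * n%:R) : R) = n%:R / n.+1%:R.
    have hN' : (n.+1%:R : R) != 0 by rewrite pnatr_eq0.
    rewrite -[n.+1]addn1 natrD in hN' *; field; by [].
  have : n%:R / n.+1%:R < (1 : R).
    by rewrite ltr_pdivrMr // mul1r ltr_nat.
  move: hs; set s := \sum_k _; set t := _ / _ => hs ht; lra.
apply: (@rank2_det R n Mm zp z2).
rewrite (Msym z2 zp).
have := sqr_ge0 (bf Mm zp z2); rewrite expr2 => hsq.
apply/eqP => hd.
have : bf Mm zp zp * bf Mm z2 z2 < 0.
  by rewrite pmulr_rlt0 //; lra.
lra.
Qed.

End Graph.

Lemma simple_compl (n : nat) (e : rel 'I_n) : simple_graph e -> simple_graph (compl_graph e).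
Proof.
case=> hs hi; split => [x y|x]; rewrite /compl_graph ?eqxx //.
by rewrite eq_sym hs.
Qed.

Lemma compl_nc (n : nat) (e : rel 'I_n) : simple_graph e -> ~ is_edgeless e ->
  ~ is_complete (compl_graph e).
Proof.
case=> hs hi hne hc; apply: hne => x y.
case: (eqVneq x y) => [->|hxy]; first exact: hi.
by move: (hc x y hxy); rewrite /compl_graph hxy.
Qed.

Lemma compl_ne (n : nat) (e : rel 'I_n) : ~ is_complete e ->
  ~ is_edgeless (compl_graph e).
Proof.
move=> hnc hne; apply: hnc => x y hxy.
by move: (hne x y); rewrite /compl_graph hxy /= negbK.
Qed.

Lemma Bm_compl (R : realFieldType) (n : nat) (e : rel 'I_n) : simple_graph e ->
  Bm R (compl_graph e) = Am R e.
Proof.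
case=> hs hi; apply/matrixP=> x y; rewrite /Bm /Am /adjmx !mxE.
rewrite /compl_graph; case: (eqVneq x y) => [->|hxy] /=; first by rewrite (negbTE (hi y)).
by rewrite negbK.
Qed.

Lemma sum_bound (R : realFieldType) (n : nat) (e : rel 'I_n) :
  simple_graph e -> ~ is_complete e -> ~ is_edgeless e ->
  (n.+2 <= \rank (Am R e) + \rank (Bm R e))%N.
Proof.
move=> He hnc hne.
case: (boolP [exists x, exists w, exists y, [&& e x w, e w y, x != y & ~~ e x y]]) => hp3.
  move/existsP: hp3 => [x /existsP[w /existsP[y /and4P[h1 h2 h3 h4]]]].
  case: (boolP [exists x, exists y, exists w, [&& e x y, ~~ e x w, ~~ e y w, x != w & y != w]]) => hk.
    move/existsP: hk => [x' /existsP[y' /existsP[w' /and5P[k1 k2 k3 k4 k5]]]].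
    have := @case_plane R n e He x w y x' y' w' h1 h2 h3 h4 k1 k2 k3 k4 k5.
    have := @rank_AB R n e He; lia.
  have Hc := simple_compl He.
  have hf : P3free (compl_graph e).
    move=> a b c; rewrite /compl_graph => /andP[hab nab] /andP[hbc nbc] hac.
    rewrite hac /=; apply/negP => eac.
    move/negP: hk; apply; apply/existsP; exists a; apply/existsP; exists c; apply/existsP; exists b.
    case: He => hs _.
    apply/and5P; split => //; first by rewrite hs.
    by rewrite eq_sym.
  have := @case_free R n (compl_graph e) Hc hf (compl_nc He hne) (compl_ne hnc).
  have := @rank_AB R n (compl_graph e) Hc.
  rewrite Bm_compl //.
  change (Am R (compl_graph e)) with (Bm R e); lia.
have hf : P3free e.
  move=> a b c hab hbc hac; case: (boolP (e a c)) => // nac.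
  exfalso; move/negP: hp3; apply; apply/existsP; exists a; apply/existsP; exists b; apply/existsP; exists c.
  by apply/and4P.
have := @case_free R n e He hf hnc hne.
have := @rank_AB R n e He; lia.
Qed.


Section Rank2.
Variables (R : realFieldType) (n : nat) (X : 'M[R]_n).
Local Open Scope ring_scope.
Hypothesis hsym : forall i j, X i j = X j i.
Hypothesis h01 : forall i j, X i j = 0 \/ X i j = 1.
Hypothesis hdiag : forall i, X i i = 1.
Variables u v : 'I_n.
Hypothesis huv : X u v = 0.
Hypothesis hr : (\rank X <= 2)%N.

Lemma rank2_decomp w : exists a b : R, forall k, X w k = a * X u k + b * X v k.
Proof.
set Z := Zm (delta_mx 0 u) (delta_mx 0 v) *m X.
have rf : row_free Z.
  apply: inj_row_free => t; rewrite /Z mulmxA tZ => h0.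
  have hu := congr1 (fun M : 'rV[R]_n => M 0 u) h0.
  have hv' := congr1 (fun M : 'rV[R]_n => M 0 v) h0.
  rewrite /= [in RHS]mxE in hu; rewrite /= [in RHS]mxE in hv'.
  rewrite mulmxDl -!scalemxAl -!rowE !mxE hdiag huv hsym huv in hu hv'.
  move: hu hv'; rewrite hdiag mulr1 !mulr0 addr0 add0r mulr1 => hu hv'.
  apply/matrixP=> i j; rewrite (ord1 i) !mxE.
  case: j => [[|[|k]] hk] //.
  - by rewrite -hu; congr (t _ _); apply: val_inj.
  - by rewrite -hv'; congr (t _ _); apply: val_inj.
have rZ : \rank Z = 2 by apply/eqP.
have sZX : (Z <= X)%MS by rewrite /Z submxMl.
have sXZ : (X <= Z)%MS.
  have := mxrank_leqif_sup sZX; rewrite rZ => /leqifP.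
  case: ifP => // _; lia.
have : (row w X <= Z)%MS by apply: submx_trans sXZ; exact: row_sub.
case/submxP => D hD.
exists (D 0 0), (D 0 1) => k.
have := congr1 (fun M : 'rV[R]_n => M 0 k) hD.
rewrite /Z mulmxA tZ mulmxDl -!scalemxAl -!rowE !mxE => ->.
by [].
Qed.

Definition cc (w : 'I_n) : bool := X u w == 1.

Lemma rank2_rows w :
  (cc w -> forall k, X w k = X u k) /\ (~~ cc w -> forall k, X w k = X v k).
Proof.
have [a [b hab]] := rank2_decomp w.
have ha : X w u = a by rewrite hab hdiag hsym huv; ring.
have hb : X w v = b by rewrite hab hdiag huv; ring.
have hw : 1 = a * a + b * b by rewrite -(hdiag w) hab (hsym u) (hsym v) ha hb.
rewrite /cc hsym ha; split => hc k.
  move/eqP: hc => ha1; rewrite ha1 in hw.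
  have hb0 : b = 0.
    case: (h01 w v) => hwv; rewrite hwv in hb; first by rewrite -hb.
    by rewrite -hb in hw; lra.
  by rewrite hab ha1 hb0; ring.
have ha0 : a = 0.
  case: (h01 w u) => hwu; rewrite hwu in ha; first by rewrite -ha.
  by rewrite -ha eqxx in hc.
have hb1 : b = 1.
  rewrite ha0 in hw; case: (h01 w v) => hwv; rewrite hwv in hb; last by rewrite -hb.
  by rewrite -hb in hw; lra.
by rewrite hab ha0 hb1; ring.
Qed.

Lemma rank2_color w k : X w k = (cc w == cc k)%:R.
Proof.
have [h1 h2] := rank2_rows w.
case: (boolP (cc w)) => hcw.
  rewrite h1 // eq_sym eqb_id /cc.
  by case: (h01 u k) => ->; rewrite ?eqxx //; rewrite eq_sym oner_eq0.
rewrite h2 // eq_sym.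
have [k1 k2] := rank2_rows k.
case: (boolP (cc k)) => hck /=.
  by rewrite hsym k1 // hsym huv.
rewrite hsym k2 // hdiag.
Qed.

End Rank2.

Local Open Scope ring_scope.
Lemma rank_color (R : realFieldType) (n : nat) (X : 'M[R]_n) (c : 'I_n -> bool) :
  (forall i j, X i j = (c i == c j)%:R) -> (\rank X <= 2)%N.
Proof.
move=> hX.
pose W : 'M[R]_(2, n) := \matrix_(i < 2, j < n) (if i == 0 then (c j)%:R else (~~ c j)%:R).
have -> : X = W^T *m W.
  apply/matrixP=> i j; rewrite hX !mxE big_ord_recl big_ord1 !mxE /=.
  by case: (c i); case: (c j) => /=; rewrite ?mulr0 ?mulr1 ?addr0 ?add0r.
apply: leq_trans (mxrankM_maxr _ _) _; exact: rank_leq_row.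
Qed.

Local Close Scope ring_scope.
Lemma iso_core (n : nat) (f : rel 'I_n) (c : 'I_n -> bool) :
  (forall x y, f x y = (c x != c y)) ->
  graph_iso f (complete_bipartite #|[set x | c x]| (n - #|[set x | c x]|)).
Proof.
move=> hf.
set P := [set x | c x]; set a := #|P|.
have ha : (a <= n)%N by have := max_card P; rewrite card_ord.
have hm : (a + (n - a))%N = n by rewrite subnKC.
set s := enum P ++ enum (~: P).
have hsize : size s = n by rewrite size_cat -!cardE cardsC card_ord.
have hin x : x \in s by rewrite mem_cat !mem_enum in_setC; case: (x \in P).
have hlt x : (index x s < a + (n - a))%N.
  have := index_mem x s; rewrite hin hsize => h; by rewrite hm.
have huniq : uniq s.
  rewrite cat_uniq !enum_uniq /= andbT; apply/hasPn => x; rewrite !mem_enum in_setC.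
  by move=> ->.
pose g (x : 'I_n) : 'I_(a + (n - a)) := Ordinal (hlt x).
pose h (k : 'I_(a + (n - a))) : 'I_n := nth (cast_ord hm k) s k.
exists g; split.
  exists h.
    by move=> x; rewrite /h /g /= nth_index.
  move=> k; apply: val_inj; rewrite /g /h /= index_uniq //.
  by rewrite hsize -{2}hm ltn_ord.
move=> x y; rewrite hf /complete_bipartite /g /=.
have key z : (index z s < a)%N = c z.
  rewrite /s index_cat mem_enum.
  case: ifP => hz.
    by rewrite /a cardE index_mem mem_enum hz; move: hz; rewrite inE.
  rewrite /a cardE ltnNge leq_addr /=; by move: hz; rewrite inE => ->.
by rewrite !key.
Qed.

Lemma iso_bip (n : nat) (f : rel 'I_n) (c : 'I_n -> bool) :
  (forall x y, f x y = (c x != c y)) -> (exists x, c x) -> (exists y, ~~ c y) ->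
  exists a : nat, [/\ (1 <= a)%N, (a <= n./2)%N & graph_iso f (complete_bipartite a (n - a))].
Proof.
move=> hf [x0 hx0] [y0 hy0].
set P := [set x | c x]; set Q := [set x | ~~ c x].
have hPQ : (#|P| + #|Q| = n)%N.
  have -> : Q = ~: P by apply/setP => x; rewrite !inE.
  by rewrite cardsC card_ord.
have P1 : (0 < #|P|)%N by apply/card_gt0P; exists x0; rewrite inE.
have Q1 : (0 < #|Q|)%N by apply/card_gt0P; exists y0; rewrite inE.
case: (leqP (2 * #|P|) n) => h2.
  exists #|P|; split => //.
    by rewrite geq_half_double -mul2n.
  exact: iso_core.
exists #|Q|; split => //.
  rewrite geq_half_double -mul2n; lia.
apply: (iso_core (c := fun x => ~~ c x)) => x y.
by rewrite hf; case: (c x); case: (c y).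
Qed.

Lemma iso_color (n a b : nat) (f : rel 'I_n) :
  graph_iso f (complete_bipartite a b) -> exists c : 'I_n -> bool, forall x y, f x y = (c x != c y).
Proof.
case=> g [_ hg]; exists (fun x => (g x < a)%N) => x y; exact: hg.
Qed.

Lemma bool_cast_inj (R : realFieldType) (b1 b2 : bool) : (b1%:R : R)%R = (b2%:R)%R -> b1 = b2.
Proof. by case: b1; case: b2 => //= /eqP; rewrite ?oner_eq0 // eq_sym oner_eq0. Qed.

Theorem theorem4p2 (R : realFieldType) (n : nat) (e : rel 'I_n) :
  simple_graph e -> ~ is_complete e -> ~ is_edgeless e ->
  (2 * n <= \rank (adjmx R e + 1%:M)%R * \rank (adjmx R (compl_graph e) + 1%:M)%R)%N /\
  ((\rank (adjmx R e + 1%:M)%R * \rank (adjmx R (compl_graph e) + 1%:M)%R = 2 * n)%N <->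
   exists a : nat, [/\ (1 <= a)%N, (a <= n./2)%N &
     (graph_iso e (complete_bipartite a (n - a)) \/
      graph_iso (compl_graph e) (complete_bipartite a (n - a)))]).
Proof.
move=> He hnc hne.
change (adjmx R e + 1%:M)%R with (Am R e).
change (adjmx R (compl_graph e) + 1%:M)%R with (Bm R e).
have hsum := sum_bound R He hnc hne.
have hr := rank_leq_row (Am R e); have hs := rank_leq_row (Bm R e).
move: hsum hr hs; set r := \rank (Am R e); set s := \rank (Bm R e) => hsum hr hs.
have r2 : (2 <= r)%N by lia.
have s2 : (2 <= s)%N by lia.
split; first by nia.
have hsymA i j : Am R e i j = Am R e j i by rewrite !(Am_E R He) eq_sym (esym He).
have hsymB i j : Bm R e i j = Bm R e j i by rewrite !Bm_E eq_sym (esym He).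
have h01A i j : Am R e i j = 0%R \/ Am R e i j = 1%R by rewrite (Am_E R He); case: (_ || _); [right|left].
have h01B i j : Bm R e i j = 0%R \/ Bm R e i j = 1%R by rewrite Bm_E; case: (_ || _); [right|left].
have hdA i : Am R e i i = 1%R by rewrite (Am_E R He) eqxx.
have hdB i : Bm R e i i = 1%R by rewrite Bm_E eqxx.
split.
- move=> heq.
  have [hs2|hr2] : s = 2 \/ r = 2.
    case: (eqVneq s 2) => [->|hs2]; [by left|right].
    case: (eqVneq r 2) => // hr2; exfalso.
    have r3 : (3 <= r)%N by lia.
    have s3 : (3 <= s)%N by lia.
    nia.
  + have [u [v huv]] := exists_edge hne.
    have nuv : u != v by apply: contraTneq huv => ->; rewrite (eirr He).
    have hX : Bm R e u v = 0%R by rewrite Bm_E (negbTE nuv) huv.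
    have hrk : (\rank (Bm R e) <= 2)%N by rewrite -/s hs2.
    set c := @cc R n (Bm R e) u.
    have hcol : forall x y, e x y = (c x != c y).
      move=> x y; case: (eqVneq x y) => [->|hxy]; first by rewrite (eirr He) eqxx.
      have := rank2_color hsymB h01B hdB hX hrk x y.
      rewrite Bm_E (negbTE hxy) /= => /(@bool_cast_inj R) <-.
      by rewrite negbK.
    have cu : c u by rewrite /c /cc hdB.
    have cv : ~~ c v by rewrite /c /cc hX eq_sym oner_eq0.
    have [a [h1 h2 h3]] := iso_bip hcol (ex_intro _ u cu) (ex_intro _ v cv).
    by exists a; split => //; left.
  + have [u [v [nuv huv]]] := exists_nonedge hnc.
    have hX : Am R e u v = 0%R by rewrite (Am_E R He) (negbTE nuv) (negbTE huv).
    have hrk : (\rank (Am R e) <= 2)%N by rewrite -/r hr2.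
    set c := @cc R n (Am R e) u.
    have hcol : forall x y, compl_graph e x y = (c x != c y).
      move=> x y; rewrite /compl_graph; case: (eqVneq x y) => [->|hxy]; first by rewrite eqxx.
      have := rank2_color hsymA h01A hdA hX hrk x y.
      rewrite (Am_E R He) (negbTE hxy) /= => /(@bool_cast_inj R) <-.
      by [].
    have cu : c u by rewrite /c /cc hdA.
    have cv : ~~ c v by rewrite /c /cc hX eq_sym oner_eq0.
    have [a [h1 h2 h3]] := iso_bip hcol (ex_intro _ u cu) (ex_intro _ v cv).
    by exists a; split => //; right.
- case=> a [_ _ [hi|hi]].
  + have [c hc] := iso_color hi.
    have hB : forall x y, Bm R e x y = (c x == c y)%:R%R.
      move=> x y; rewrite Bm_E; case: (eqVneq x y) => [->|hxy]; first by rewrite !eqxx.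
      by rewrite /= hc negbK.
    have := rank_color hB; rewrite -/s => hs2.
    have -> : s = 2 by lia.
    have -> : r = n by lia.
    by rewrite mulnC.
  + have [c hc] := iso_color hi.
    have hA : forall x y, Am R e x y = (c x == c y)%:R%R.
      move=> x y; rewrite (Am_E R He); case: (eqVneq x y) => [->|hxy]; first by rewrite !eqxx.
      by have := hc x y; rewrite /compl_graph hxy /= => h; rewrite -[e x y]negbK h negbK.
    have := rank_color hA; rewrite -/r => hr2.
    have -> : r = 2 by lia.
    have -> : s = n by lia.
    by [].
Qed.
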